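(* For every target rate $r>0$, $P_{\rm r}>0$ and $\mathcal C_x\in[0,1)$, writing $\beta=\frac{\Psi_r(\mathcal C_x)}{P_{\rm r}\theta_{\rm rd}(1-\mathcal C_x^2)}$, \[ \mathcal P_{\rm rd}(P_{\rm r},\mathcal C_x)=1-\frac{e^{-\beta}}{\Gamma(m_{\rm sd})\theta_{\rm sd}^{m_{\rm sd}}}\sum_{m=0}^{m_{\rm rd}-1}\sum_{k=0}^m\binom{m}{k}\frac{P_{\rm s}^k\,\Gamma(k+m_{\rm sd})\,\beta^m}{\Gamma(m+1)\left(P_{\rm s}\beta+\frac1{\theta_{\rm sd}}\right)^{k+m_{\rm sd}}}. \]
   Context: Let $P_{\rm s}>0$, $P_{\rm r}>0$ be the source and relay transmit powers. For links $ij\in\{\mathrm{rd},\mathrm{sd}\}$ let $g_{ij}$ be independent random channel gains, $g_{ij}$ gamma distributed with integer shape parameter $m_{ij}\ge1$ and scale $\theta_{ij}=\pi_{ij}/m_{ij}$, $\pi_{ij}=\mathbb E[g_{ij}]>0$; i.e. density $x^{m_{ij}-1}e^{-x/\theta_{ij}}/(\Gamma(m_{ij})\theta_{ij}^{m_{ij}})$, $x\ge0$. For $\mathcal C_x\in[0,1)$ define $R_{\rm rd}(P_{\rm r},\mathcal C_x)=\tfrac12\log_2\frac{(P_{\rm r}g_{\rm rd}+P_{\rm s}g_{\rm sd}+1)^2-(P_{\rm r}g_{\rm rd}\mathcal C_x)^2}{(P_{\rm s}g_{\rm sd}+1)^2}$. For a target rate $r>0$ put $\gamma=2^{2r}-1$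 and $\Psi_r(x)=\sqrt{1+\gamma(1-x^2)}-1$. The R–D outage probability is $\mathcal P_{\rm rd}=\mathbb P\{R_{\rm rd}<r\}$. *)

(* Defs.v *)
From Stdlib Require Import Reals Lra Factorial Binomial.
Open Scope R_scope.

Definition Gamma_nat (n : nat) : R := INR (fact (n - 1)).

Definition gamma_pdf (m : nat) (th x : R) : R :=
  if Rle_dec 0 x then x ^ (m - 1) * exp (- x / th) / (Gamma_nat m * th ^ m) else 0.

Definition log2 (x : R) : R := ln x / ln 2.

Definition R_rd (Ps Pr Cx g_rd g_sd : R) : R :=
  / 2 * log2 (((Pr * g_rd + Ps * g_sd + 1) ^ 2 - (Pr * g_rd * Cx) ^ 2)
               / (Ps * g_sd + 1) ^ 2).

Definition gamma_r (r : R) : R := Rpower 2 (2 * r) - 1.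
Definition Psi (r x : R) : R := sqrt (1 + gamma_r r * (1 - x ^ 2)) - 1.

Definition improper_integral0 (f : R -> R) (l : R) : Prop :=
  (forall b, 0 <= b -> inhabited (Riemann_integrable f 0 b)) /\
  (forall eps, 0 < eps -> exists B, 0 <= B /\
     forall b (pr : Riemann_integrable f 0 b), B <= b -> Rabs (RiemannInt pr - l) < eps).


(* P_rd = P{ R_rd < r } for independent g_rd ~ Gamma(m_rd, th_rd), g_sd ~ Gamma(m_sd, th_sd),
   written as the iterated integral of the indicator against the product density:
   P_rd = int_0^oo f_sd(y) ( int_0^oo 1{R_rd(x,y) < r} f_rd(x) dx ) dy. *)
Definition outage_prob_is (Ps Pr Cx r : R) (m_rd : nat) (th_rd : R)
    (m_sd : nat) (th_sd : R) (p : R) : Prop :=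
  exists I : R -> R,
    (forall y, 0 <= y ->
       improper_integral0
         (fun x => (if Rlt_dec (R_rd Ps Pr Cx x y) r then 1 else 0) * gamma_pdf m_rd th_rd x) (I y)) /\
    improper_integral0 (fun y => gamma_pdf m_sd th_sd y * I y) p.

(* Main.v *)
Require Import Defs.
From Stdlib Require Import Reals Binomial.
From Stdlib Require Import Lra Lia.
From Coquelicot Require Import Coquelicot.
From Stdlib Require Import Reals Factorial Binomial.
Open Scope R_scope.

Definition Imp (f : R -> R) (l : R) : Prop :=
  (forall b, 0 <= b -> ex_RInt f 0 b) /\ is_lim (fun b => RInt f 0 b) p_infty l.

Lemma is_lim_eq (f : R -> R) (l l' : R) :
  is_lim f p_infty l -> l = l' -> is_lim f p_infty l'.
Proof. intros H ->; exact H. Qed.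

Lemma Imp_to f l : Imp f l -> improper_integral0 f l.
Proof.
  intros [H1 H2]. split.
  - intros b hb. constructor. apply ex_RInt_Reals_0. now apply H1.
  - intros eps heps. apply is_lim_spec in H2.
    destruct (H2 (mkposreal eps heps)) as [M HM].
    exists (Rmax 0 (M+1)). split. apply Rmax_l.
    intros b pr hb. rewrite <- RInt_Reals. apply HM.
    pose proof (Rmax_r 0 (M+1)). lra.
Qed.

Lemma Imp_ext f g l : (forall x, 0 < x -> f x = g x) -> Imp f l -> Imp g l.
Proof.
  intros He [H1 H2]. split.
  - intros b hb. apply ex_RInt_ext with f; [|now apply H1].
    intros x hx. apply He. rewrite Rmin_left in hx; lra.
  - apply is_lim_ext_loc with (fun b => RInt f 0 b); [|exact H2].
    exists 0. intros b hb. apply RInt_ext. intros x hx.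
    apply He. rewrite Rmin_left in hx; lra.
Qed.

Lemma Imp_plus f g lf lg : Imp f lf -> Imp g lg -> Imp (fun x => f x + g x) (lf + lg).
Proof.
  intros [F1 F2] [G1 G2]. split.
  - intros b hb. apply (ex_RInt_plus f g); auto.
  - apply is_lim_ext_loc with (fun b => RInt f 0 b + RInt g 0 b).
    + exists 0. intros b hb. symmetry. apply (RInt_plus f g); [apply F1|apply G1]; lra.
    + now apply is_lim_plus'.
Qed.

Lemma Imp_scal f a l : Imp f l -> Imp (fun x => a * f x) (a * l).
Proof.
  intros [F1 F2]. split.
  - intros b hb. apply (ex_RInt_scal f); auto.
  - apply is_lim_ext_loc with (fun b => a * RInt f 0 b).
    + exists 0. intros b hb. symmetry. apply (RInt_scal f). apply F1; lra.
    + apply (is_lim_scal_l _ a p_infty (Finite l)). exact F2.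
Qed.

Lemma Imp_sum (f : nat -> R -> R) (l : nat -> R) n :
  (forall i, (i <= n)%nat -> Imp (f i) (l i)) ->
  Imp (fun x => sum_f_R0 (fun i => f i x) n) (sum_f_R0 l n).
Proof.
  induction n; intros H.
  - simpl. apply H; lia.
  - simpl. apply Imp_plus. apply IHn. intros; apply H; lia. apply H; lia.
Qed.

Lemma Imp_ev f l T : (forall b, 0 <= b -> ex_RInt f 0 b) ->
  (forall b, T <= b -> RInt f 0 b = l) -> Imp f l.
Proof.
  intros H1 H2. split. auto.
  apply is_lim_ext_loc with (fun _ => l). exists T. intros b hb. symmetry. apply H2; lra.
  apply is_lim_const.
Qed.

Fixpoint A (c : R) (n : nat) (y : R) : R :=
  match n with
  | O => - exp (- (c * y)) / c
  | S k => (- y ^ (S k) * exp (- (c * y)) + INR (S k) * A c k y) / c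
  end.

Lemma A_S c k y : A c (S k) y = (- y ^ (S k) * exp (- (c * y)) + INR (S k) * A c k y) / c.
Proof. reflexivity. Qed.

Lemma A_deriv c n y : c <> 0 -> is_derive (A c n) y (y ^ n * exp (- (c * y))).
Proof.
  intros hc. induction n.
  - simpl. auto_derive. auto. field. auto.
  - assert (H1 : is_derive (fun y => - y ^ (S n) * exp (- (c * y))) y
       (- INR (S n) * y ^ n * exp (- (c*y)) + c * (y ^ (S n) * exp (- (c * y))))).
    { auto_derive. auto. change (match n with 0%nat => 1 | S _ => INR n + 1 end) with (INR (S n)). simpl pow. ring. }
    pose proof (is_derive_scal _ _ (INR (S n)) _ IHn) as H2.
    pose proof (is_derive_plus _ _ _ _ _ H1 H2) as H3.
    pose proof (is_derive_scal _ _ (/ c) _ H3) as H4.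
    assert (E : y ^ S n * exp (- (c * y)) = / c *
     plus
       (- INR (S n) * y ^ n * exp (- (c * y)) +
        c * (y ^ S n * exp (- (c * y))))
       (INR (S n) * (y ^ n * exp (- (c * y))))).
    { unfold plus; simpl. field. auto. }
    rewrite E.
    eapply is_derive_ext. 2: exact H4.
    intros t. rewrite A_S. unfold plus; simpl. field. auto.
Qed.

Lemma gcont n c y : continuous (fun y => y ^ n * exp (- (c * y))) y.
Proof. apply (@ex_derive_continuous R_AbsRing R_NormedModule). auto_derive. auto. Qed.

Lemma A_int c n b : c <> 0 ->
  is_RInt (fun y => y ^ n * exp (- (c * y))) 0 b (A c n b - A c n 0).
Proof.
  intros hc. apply (is_RInt_derive (A c n)).
  - intros; apply A_deriv; auto.
  - intros; apply gcont.
Qed.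

Lemma A_0 c n : c <> 0 -> A c n 0 = - INR (fact n) / c ^ (S n).
Proof.
  intros hc. induction n.
  - simpl. rewrite Rmult_0_r, Ropp_0, exp_0. rewrite Rmult_1_r; reflexivity.
  - rewrite A_S. rewrite IHn. rewrite Rmult_0_r, Ropp_0, exp_0.
    change (fact (S n)) with (S n * fact n)%nat. rewrite mult_INR.
    simpl pow. rewrite Rmult_0_l. field. split; auto. apply pow_nonzero; auto.
Qed.

Lemma A_closed c n y : c <> 0 ->
  A c n y = - (INR (fact n) / c ^ (S n)) * exp (- (c * y)) *
    sum_f_R0 (fun j => (c * y) ^ j / INR (fact j)) n.
Proof.
  intros hc. induction n.
  - simpl. field. auto.
  - rewrite A_S. rewrite IHn. rewrite tech5.
    change (fact (S n)) with (S n * fact n)%nat. rewrite mult_INR.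
    set (S0 := sum_f_R0 _ n).
    rewrite Rpow_mult_distr.
    assert (INR (fact n) <> 0) by apply INR_fact_neq_0.
    assert (c ^ n <> 0) by (apply pow_nonzero; auto).
    simpl pow. field. repeat split; auto. apply not_0_INR. lia.
Qed.

Lemma sum_last_le (f : nat -> R) n : (forall i, 0 <= f i) -> f n <= sum_f_R0 f n.
Proof.
  intros H. destruct n. simpl; lra. rewrite tech5.
  pose proof (cond_pos_sum f n H). lra.
Qed.

Lemma P_lim c k : 0 < c -> is_lim (fun y => y ^ k * exp (- (c * y))) p_infty 0.
Proof.
  intros hc.
  set (K := INR (fact (S k)) / c ^ (S k)).
  apply is_lim_le_le_loc with (fun _ => 0) (fun y => K * / y).
  - exists 0. intros y hy. split.
    + apply Rmult_le_pos. apply pow_le; lra. left; apply exp_pos.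
    + rewrite exp_Ropp.
      pose proof (exp_ge_taylor (c * y) (S k) ltac:(nra)) as Ht.
      pose proof (sum_last_le (fun k0 => (c * y) ^ k0 / INR (fact k0)) (S k)) as Hl.
      cbv beta in Hl.
      assert (Hf : 0 < INR (fact (S k))) by apply INR_fact_lt_0.
      assert (Hp : forall i, 0 <= (c * y) ^ i / INR (fact i)).
      { intros i. apply Rmult_le_pos. apply pow_le; nra. left; apply Rinv_0_lt_compat, INR_fact_lt_0. }
      specialize (Hl Hp).
      assert (Hyk : 0 < y ^ k) by (apply pow_lt; lra).
      assert (Hck : 0 < c ^ S k) by (apply pow_lt; lra).
      assert (Hexp := exp_pos (c * y)).
      set (E := exp (c * y)) in *. set (F := INR (fact (S k))) in *.
      assert (HE : (c * y) ^ S k <= F * E).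
      { apply Rmult_le_reg_r with (/ F). apply Rinv_0_lt_compat; lra.
        replace (F * E * / F) with E by (field; lra). unfold Rdiv in Hl. lra. }
      rewrite Rpow_mult_distr in HE.
      change (y ^ S k) with (y * y ^ k) in HE.
      unfold K. fold F.
      apply Rmult_le_reg_r with (E * c ^ S k * y). { apply Rmult_lt_0_compat; [apply Rmult_lt_0_compat|]; lra. }
      replace (y ^ k * / E * (E * c ^ S k * y)) with (c ^ S k * (y * y ^ k)) by (field; lra).
      replace (F / c ^ S k * / y * (E * c ^ S k * y)) with (F * E) by (field; lra).
      exact HE.
  - apply is_lim_const.
  - apply is_lim_eq with (K * 0); [|ring].
    apply (is_lim_scal_l _ K p_infty (Finite 0)).
    apply (is_lim_inv (fun y => y) p_infty p_infty). apply is_lim_id. discriminate.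
Qed.

Lemma A_lim c n : 0 < c -> is_lim (A c n) p_infty 0.
Proof.
  intros hc. induction n.
  - simpl. apply is_lim_ext with (fun y => (- / c) * (y ^ 0 * exp (- (c * y)))).
    intros; simpl; field; lra.
    apply is_lim_eq with ((- / c) * 0); [|ring].
    apply (is_lim_scal_l _ _ p_infty (Finite 0)). apply P_lim; auto.
  - apply is_lim_ext with (fun y => (- / c) * (y ^ (S n) * exp (- (c * y))) + (INR (S n) / c) * A c n y).
    intros; rewrite A_S; field; lra.
    apply is_lim_eq with ((- / c) * 0 + (INR (S n) / c) * 0); [|ring].
    apply is_lim_plus'.
    apply (is_lim_scal_l _ _ p_infty (Finite 0)). apply P_lim; auto.
    apply (is_lim_scal_l _ _ p_infty (Finite 0)). auto.
Qed.

Lemma Gamma_imp c n : 0 < c ->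
  Imp (fun y => y ^ n * exp (- (c * y))) (INR (fact n) / c ^ (S n)).
Proof.
  intros hc. split.
  - intros b hb. eexists. apply A_int. lra.
  - apply is_lim_ext with (fun b => A c n b - A c n 0).
    intros b. symmetry. apply is_RInt_unique. apply A_int. lra.
    apply is_lim_eq with (0 - A c n 0).
    apply (is_lim_minus' (A c n) (fun _ => A c n 0)). apply A_lim; auto. apply is_lim_const.
    rewrite A_0 by lra. field. apply pow_nonzero; lra.
Qed.

Lemma ln2_pos : 0 < ln 2.
Proof. rewrite <- ln_1. apply ln_increasing; lra. Qed.

Lemma gamma_pos r : 0 < r -> 0 < gamma_r r.
Proof.
  intros hr. unfold gamma_r, Rpower.
  pose proof ln2_pos.
  assert (exp 0 < exp (2 * r * ln 2)) by (apply exp_increasing; nra). rewrite exp_0 in H0. lra.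
Qed.

Lemma key Ps Pr r Cx x y : 0 < Ps -> 0 < Pr -> 0 < r -> 0 <= Cx -> Cx < 1 ->
  0 < x -> 0 <= y ->
  (R_rd Ps Pr Cx x y < r <-> x < (Ps * y + 1) * (Psi r Cx / (Pr * (1 - Cx ^ 2)))).
Proof.
  intros hPs hPr hr hC0 hC1 hx hy.
  pose proof (gamma_pos r hr) as hg. set (g := gamma_r r) in *.
  set (D := Ps * y + 1). assert (hD : 1 <= D) by (unfold D; nra).
  set (u := Pr * x). assert (hu : 0 < u) by (unfold u; nra).
  set (k := 1 - Cx ^ 2). assert (hk : 0 < k) by (unfold k; simpl; nra).
  assert (hk1 : k <= 1) by (unfold k; simpl; nra).
  set (s := sqrt (1 + g * k)).
  assert (hs2 : s * s = 1 + g * k) by (unfold s; apply sqrt_sqrt; nra).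
  assert (hs0 : 0 <= s) by (unfold s; apply sqrt_pos).
  assert (hs1 : 1 < s) by nra.
  assert (HPsi : Psi r Cx = s - 1) by reflexivity.
  rewrite HPsi.
  assert (HQ : 0 < ((u + D) ^ 2 - (u * Cx) ^ 2) / D ^ 2).
  { apply Rdiv_lt_0_compat; [|simpl; nra]. simpl.
    assert (u * Cx * (u * Cx) <= u * u) by (unfold k in hk; simpl in hk; nra). nra. }
  unfold R_rd, log2. fold D. fold u.
  replace (u + Ps * y + 1) with (u + D) by (unfold D; ring).
  pose proof ln2_pos.
  transitivity (((u + D) ^ 2 - (u * Cx) ^ 2) / D ^ 2 < 1 + g).
  { assert (E1 : 1 + g = exp (2 * r * ln 2)) by (unfold g, gamma_r, Rpower; ring).
    rewrite E1. split; intros H1.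
    - rewrite <- (exp_ln _ HQ). apply exp_increasing.
      apply Rmult_lt_reg_r with (/ ln 2 * / 2). apply Rmult_lt_0_compat; apply Rinv_0_lt_compat; lra.
      replace (2 * r * ln 2 * (/ ln 2 * / 2)) with r by (field; lra).
      unfold Rdiv in H1. lra.
    - rewrite <- (exp_ln _ HQ) in H1. apply exp_lt_inv in H1.
      replace r with (/ 2 * (2 * r * ln 2 / ln 2)) by (field; lra).
      apply Rmult_lt_compat_l. lra. unfold Rdiv. apply Rmult_lt_compat_r.
      apply Rinv_0_lt_compat; lra. exact H1. }
  assert (Hfac : k * (k * u * u + 2 * u * D - g * D * D) = (k * u - D * (s - 1)) * (k * u + D * (s + 1))).
  { assert (E : k * (k * u * u + 2 * u * D - g * D * D) - (k * u - D * (s - 1)) * (k * u + D * (s + 1))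
       = D * D * (s * s - (1 + g * k))) by ring.
    rewrite hs2 in E. lra. }
  assert (Hv : 0 < k * u + D * (s + 1)) by nra.
  transitivity (k * u - D * (s - 1) < 0).
  - split; intros H1.
    + assert (H2 : (u + D) ^ 2 - (u * Cx) ^ 2 < (1 + g) * D ^ 2).
      { apply Rmult_lt_reg_r with (/ D ^ 2). apply Rinv_0_lt_compat; simpl; nra.
        replace ((1 + g) * D ^ 2 * / D ^ 2) with (1 + g) by (field; lra). exact H1. }
      assert (Hq : k * u * u + 2 * u * D - g * D * D < 0).
      { unfold k in *. simpl in H2. simpl. nra. }
      destruct (Rlt_or_le (k * u - D * (s - 1)) 0) as [h|h]; auto.
      assert (0 <= (k * u - D * (s - 1)) * (k * u + D * (s + 1))) by nra. nra.
    + assert (Hq : k * u * u + 2 * u * D - g * D * D < 0).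
      { assert (k * (k * u * u + 2 * u * D - g * D * D) < 0) by nra. nra. }
      apply Rmult_lt_reg_r with (D ^ 2). simpl; nra.
      replace (((u + D) ^ 2 - (u * Cx) ^ 2) / D ^ 2 * D ^ 2) with ((u + D) ^ 2 - (u * Cx) ^ 2) by (field; lra).
      unfold k in *. simpl in *. nra.
  - unfold u. split; intros H1.
    + apply Rmult_lt_reg_r with (Pr * k). nra.
      replace (D * ((s - 1) / (Pr * k)) * (Pr * k)) with (D * (s - 1)) by (field; lra). nra.
    + assert (H2 : x * (Pr * k) < D * ((s - 1) / (Pr * k)) * (Pr * k)) by (apply Rmult_lt_compat_r; nra).
      replace (D * ((s - 1) / (Pr * k)) * (Pr * k)) with (D * (s - 1)) in H2 by (field; lra). nra.
Qed.

Ltac Req := match goal with |- ?a = ?b => change (@eq R a b) end.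

Lemma is_RInt_eq (f : R -> R) a b l l' : is_RInt f a b l -> l = l' -> is_RInt f a b l'.
Proof. intros H ->; exact H. Qed.

Lemma inner (g : R -> R) M th T : (1 <= M)%nat -> 0 < th -> 0 < T ->
  (forall x, 0 < x -> g x = if Rlt_dec x T then x ^ (M - 1) * exp (- (/ th * x)) / (Gamma_nat M * th ^ M) else 0) ->
  Imp g (1 - exp (- (/ th * T)) * sum_f_R0 (fun j => (/ th * T) ^ j / INR (fact j)) (M - 1)).
Proof.
  intros hM hth hT Hg.
  destruct M as [|n]; [lia|]. replace (S n - 1)%nat with n in * by lia.
  unfold Gamma_nat in Hg. replace (S n - 1)%nat with n in Hg by lia.
  set (c := / th). assert (hc : 0 < c) by (apply Rinv_0_lt_compat; lra).
  set (K := INR (fact n) * th ^ S n).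
  assert (hK : 0 < K) by (apply Rmult_lt_0_compat; [apply INR_fact_lt_0|apply pow_lt; lra]).
  assert (Hp : forall b, is_RInt (fun x => / K * (x ^ n * exp (- (c * x)))) 0 b (/ K * (A c n b - A c n 0))).
  { intros b. apply (is_RInt_scal (V := R_NormedModule)). apply A_int. lra. }
  assert (Hle : forall b, 0 <= b <= T -> is_RInt g 0 b (/ K * (A c n b - A c n 0))).
  { intros b hb. eapply is_RInt_ext. 2: apply Hp.
    intros x hx. rewrite Rmin_left in hx by lra. rewrite Rmax_right in hx by lra.
    rewrite Hg by lra. destruct (Rlt_dec x T); [|lra]. match goal with |- ?a = ?b => change (@eq R a b) end. unfold K, c.
    assert (INR (fact n) <> 0) by apply INR_fact_neq_0.
    assert (th ^ S n <> 0) by (apply pow_nonzero; lra).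
    field. repeat split; auto; lra. }
  assert (Hge : forall b, T <= b -> is_RInt g 0 b (/ K * (A c n T - A c n 0))).
  { intros b hb. apply is_RInt_eq with (plus (/ K * (A c n T - A c n 0)) (scal (b - T) 0)).
    apply (is_RInt_Chasles (V := R_NormedModule)) with T. apply Hle; lra.
    eapply is_RInt_ext. 2: apply (is_RInt_const (V := R_NormedModule)).
    intros x hx. rewrite Rmin_left in hx by lra. rewrite Rmax_right in hx by lra.
    rewrite Hg by lra. destruct (Rlt_dec x T); [lra|]. reflexivity.
    change (scal (b - T) 0) with ((b - T) * 0). unfold plus; simpl. Req. ring. }
  apply Imp_ev with T.
  - intros b hb. destruct (Rle_dec b T). eexists; apply Hle; lra. eexists; apply Hge; lra.
  - intros b hb. rewrite (is_RInt_unique _ _ _ _ (Hge b hb)).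
    rewrite A_closed, A_0 by lra. unfold K, c. rewrite pow_inv.
    assert (INR (fact n) <> 0) by apply INR_fact_neq_0.
    assert (th ^ S n <> 0) by (apply pow_nonzero; lra).
    Req. field. split; auto; lra.
Qed.

Lemma sum_scal_l a (f : nat -> R) n : a * sum_f_R0 f n = sum_f_R0 (fun i => a * f i) n.
Proof. induction n; simpl; [ring|]. rewrite <- IHn. ring. Qed.

Lemma Imp_eq f l l' : Imp f l -> l = l' -> Imp f l'.
Proof. intros H ->; exact H. Qed.

Lemma Psi_pos r Cx : 0 < r -> 0 <= Cx -> Cx < 1 -> 0 < Psi r Cx.
Proof.
  intros hr h0 h1. pose proof (gamma_pos r hr). unfold Psi.
  assert (0 < 1 - Cx ^ 2) by (simpl; nra).
  assert (1 < 1 + gamma_r r * (1 - Cx ^ 2)) by (assert (0 < gamma_r r * (1 - Cx ^ 2)) by (apply Rmult_lt_0_compat; auto); lra).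
  pose proof (sqrt_lt_1_alt 1 (1 + gamma_r r * (1 - Cx ^ 2)) ltac:(lra)). rewrite sqrt_1 in H2. lra.
Qed.

Lemma S_expand b Ps y n :
  sum_f_R0 (fun m => (b * (Ps * y + 1)) ^ m / INR (fact m)) n =
  sum_f_R0 (fun m => sum_f_R0 (fun k => (C m k * Ps ^ k * b ^ m / INR (fact m)) * y ^ k) m) n.
Proof.
  apply sum_eq. intros m _.
  rewrite Rpow_mult_distr, binomial.
  replace (b ^ m * sum_f_R0 (fun i => C m i * (Ps * y) ^ i * 1 ^ (m - i)) m / INR (fact m))
    with ((b ^ m / INR (fact m)) * sum_f_R0 (fun i => C m i * (Ps * y) ^ i * 1 ^ (m - i)) m)
    by (unfold Rdiv; ring).
  rewrite sum_scal_l. apply sum_eq. intros i _.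
  rewrite pow1, Rpow_mult_distr. assert (INR (fact m) <> 0) by apply INR_fact_neq_0.
  field. auto.
Qed.

Theorem theorem1 (Ps Pr pi_rd pi_sd r Cx : R) (m_rd m_sd : nat)
  (hPs : 0 < Ps) (hPr : 0 < Pr) (hpird : 0 < pi_rd) (hpisd : 0 < pi_sd)
  (hmrd : (1 <= m_rd)%nat) (hmsd : (1 <= m_sd)%nat)
  (hr : 0 < r) (hCx0 : 0 <= Cx) (hCx1 : Cx < 1) :
  let th_rd := pi_rd / INR m_rd in
  let th_sd := pi_sd / INR m_sd in
  let beta := Psi r Cx / (Pr * th_rd * (1 - Cx ^ 2)) in
  outage_prob_is Ps Pr Cx r m_rd th_rd m_sd th_sd
    (1 - exp (- beta) / (Gamma_nat m_sd * th_sd ^ m_sd) *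
       sum_f_R0 (fun m =>
         sum_f_R0 (fun k =>
           C m k * Ps ^ k * Gamma_nat (k + m_sd) * beta ^ m
           / (Gamma_nat (m + 1) * (Ps * beta + / th_sd) ^ (k + m_sd))) m)
       (m_rd - 1)).
Proof.
  intros th_rd th_sd beta.
  assert (hth1 : 0 < th_rd).
  { unfold th_rd. apply Rdiv_lt_0_compat; auto. apply lt_0_INR; lia. }
  assert (hth2 : 0 < th_sd).
  { unfold th_sd. apply Rdiv_lt_0_compat; auto. apply lt_0_INR; lia. }
  assert (hk : 0 < 1 - Cx ^ 2) by (simpl; nra).
  assert (hbeta : 0 < beta).
  { unfold beta. apply Rdiv_lt_0_compat. apply Psi_pos; auto.
    apply Rmult_lt_0_compat; [apply Rmult_lt_0_compat|]; auto. }
  assert (Hbd : beta = Psi r Cx / (Pr * th_rd * (1 - Cx ^ 2))) by reflexivity.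
  clearbody th_rd th_sd beta.
  set (I := fun y => 1 - exp (- (/ th_rd * ((Ps * y + 1) * beta * th_rd))) *
     sum_f_R0 (fun j => (/ th_rd * ((Ps * y + 1) * beta * th_rd)) ^ j / INR (fact j)) (m_rd - 1)).
  exists I. split.
  - intros y hy. apply Imp_to. apply inner; auto.
    + apply Rmult_lt_0_compat; [apply Rmult_lt_0_compat|]; nra.
    + intros x hx. unfold gamma_pdf. destruct (Rle_dec 0 x) as [_|]; [|lra].
      assert (HT : (Ps * y + 1) * beta * th_rd = (Ps * y + 1) * (Psi r Cx / (Pr * (1 - Cx ^ 2)))).
      { rewrite Hbd. field. repeat split; lra. }
      pose proof (key Ps Pr r Cx x y hPs hPr hr hCx0 hCx1 hx hy) as Hk. rewrite <- HT in Hk.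
      replace (- x / th_rd) with (- (/ th_rd * x)) by (unfold Rdiv; ring).
      destruct (Rlt_dec (R_rd Ps Pr Cx x y) r) as [h1|h1];
      destruct (Rlt_dec x ((Ps * y + 1) * beta * th_rd)) as [h2|h2]; try ring; tauto.
  - apply Imp_to.
    destruct m_sd as [|n2]; [lia|].
    set (G2 := Gamma_nat (S n2) * th_sd ^ S n2).
    assert (HG2 : G2 = INR (fact n2) * th_sd ^ S n2).
    { unfold G2, Gamma_nat. replace (S n2 - 1)%nat with n2 by lia. reflexivity. }
    assert (hG2 : 0 < G2).
    { rewrite HG2. apply Rmult_lt_0_compat; [apply INR_fact_lt_0|apply pow_lt; lra]. }
    set (cc := Ps * beta + / th_sd).
    assert (hcc : 0 < cc).
    { unfold cc. assert (0 < / th_sd) by (apply Rinv_0_lt_compat; lra). nra. }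
    set (coef := fun m k => exp (- beta) / G2 * (C m k * Ps ^ k * beta ^ m / INR (fact m))).
    apply Imp_ext with (fun y => / G2 * (y ^ n2 * exp (- (/ th_sd * y))) + (-1) *
      sum_f_R0 (fun m => sum_f_R0 (fun k => coef m k * (y ^ (k + n2) * exp (- (cc * y)))) m) (m_rd - 1)).
    + intros y hy. unfold gamma_pdf. destruct (Rle_dec 0 y) as [_|]; [|lra]. unfold I.
      replace (/ th_rd * ((Ps * y + 1) * beta * th_rd)) with (beta * (Ps * y + 1)) by (field; lra).
      rewrite S_expand. fold G2. replace (S n2 - 1)%nat with n2 by lia.
      replace (- (/ th_sd * y)) with (- y / th_sd) by (unfold Rdiv; ring).
      set (P := y ^ n2 * exp (- y / th_sd) / G2).
      set (E := exp (- (beta * (Ps * y + 1)))).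
      assert (HS : sum_f_R0 (fun m => sum_f_R0 (fun k => coef m k * (y ^ (k + n2) * exp (- (cc * y)))) m) (m_rd - 1)
        = P * E * sum_f_R0 (fun m => sum_f_R0 (fun k => C m k * Ps ^ k * beta ^ m / INR (fact m) * y ^ k) m) (m_rd - 1)).
      { rewrite sum_scal_l. apply sum_eq. intros m _. rewrite sum_scal_l. apply sum_eq. intros k _.
        unfold coef, P, E. rewrite pow_add.
        assert (HE : exp (- (cc * y)) = exp (- y / th_sd) * exp (- (beta * (Ps * y + 1))) / exp (- beta)).
        { rewrite <- exp_plus. assert (Hb : exp (- beta) > 0) by apply exp_pos.
          apply Rmult_eq_reg_r with (exp (- beta)); [|lra].
          replace (exp (- y / th_sd + - (beta * (Ps * y + 1))) / exp (- beta) * exp (- beta))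
            with (exp (- y / th_sd + - (beta * (Ps * y + 1)))) by (field; lra).
          rewrite <- exp_plus. f_equal. unfold cc. field. lra. }
        rewrite HE. assert (exp (- beta) > 0) by apply exp_pos.
        assert (INR (fact m) <> 0) by apply INR_fact_neq_0.
        field. repeat split; auto; lra. }
      rewrite HS. unfold P. field. lra.
    + eapply Imp_eq.
      * apply Imp_plus. apply Imp_scal. apply Gamma_imp. apply Rinv_0_lt_compat; lra.
        apply Imp_scal. apply Imp_sum; intros m _. apply Imp_sum; intros k _.
        apply Imp_scal. apply Gamma_imp. exact hcc.
      * assert (E1 : / G2 * (INR (fact n2) / (/ th_sd) ^ S n2) = 1).
        { rewrite HG2, pow_inv. assert (INR (fact n2) <> 0) by apply INR_fact_neq_0.
          assert (th_sd ^ S n2 <> 0) by (apply pow_nonzero; lra). field. auto. }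
        rewrite E1. fold G2. unfold Rminus. f_equal.
        replace (-1 * sum_f_R0 _ (m_rd - 1)) with (- sum_f_R0 (fun m => sum_f_R0 (fun k => coef m k * (INR (fact (k + n2)) / cc ^ S (k + n2))) m) (m_rd - 1)) by ring.
        f_equal. rewrite sum_scal_l. apply sum_eq. intros m _.
        rewrite sum_scal_l. apply sum_eq. intros k _. unfold coef, Gamma_nat.
        replace (k + S n2 - 1)%nat with (k + n2)%nat by lia.
        replace (m + 1 - 1)%nat with m by lia.
        replace (k + S n2)%nat with (S (k + n2)) by lia. fold cc.
        assert (INR (fact m) <> 0) by apply INR_fact_neq_0.
        assert (cc ^ S (k + n2) <> 0) by (apply pow_nonzero; lra).
        field. repeat split; auto; lra.
Qed.
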